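(* For integers $s,t\ge0$ let $m_{i,j}^{s,t}=\int_{(0,1)^2}\frac{x^{s+i}y^{s+j}}{x+y}\left(\frac{1-x}{1+x}\right)^t\left(\frac{1-y}{1+y}\right)^tdx\,dy$, $\tau_n^{s,t}=\det(m_{i,j}^{s,t})_{i,j=0}^{n-1}$ and $\xi_n^{s,t}=\det(m_{i,j+1}^{s,t})_{i,j=0}^{n-1}$ for $n\ge1$, with $\tau_0^{s,t}=\xi_0^{s,t}=1$. Then for all $n\ge1$ and $s,t\ge0$, $$\tau_{n+1}^{s,t}\tau_{n-1}^{s+1,t}=\tau_n^{s,t}\tau_n^{s+1,t}-\big(\xi_n^{s,t}\big)^2.$$
   Context: Empty determinants equal $1$. *)

(* Defs.v *)
From HB Require Import structures.
From mathcomp Require Import all_boot all_order all_algebra.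
From mathcomp Require Import all_classical all_reals all_analysis.
Set Implicit Arguments. Unset Strict Implicit. Unset Printing Implicit Defensive.
Import Order.TTheory GRing.Theory Num.Theory.
Local Open Scope classical_set_scope.
Local Open Scope ring_scope.

(* The integrand is nonnegative on
   the square, so the extended-real integral is well defined; it is finite,
   and we take its real value with [fine]. *)
Definition mom (R : realType) (s t i j : nat) : R :=
  fine (\int[(@lebesgue_measure R \x @lebesgue_measure R)%E]_(z in `]0, 1[ `*` `]0, 1[)
    ((z.1 ^+ (s + i) * z.2 ^+ (s + j) / (z.1 + z.2)) *
     ((1 - z.1) / (1 + z.1)) ^+ t * ((1 - z.2) / (1 + z.2)) ^+ t)%:E).

(* tau_n^{s,t} = det (m_{i,j}^{s,t})_{i,j=0}^{n-1}; for n = 0 the empty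
   determinant is 1. *)
Definition tau (R : realType) (n s t : nat) : R :=
  \det (\matrix_(i < n, j < n) mom R s t i j).

Definition xi (R : realType) (n s t : nat) : R :=
  \det (\matrix_(i < n, j < n) mom R s t i j.+1).

(* Main.v *)
Require Import Defs.
From mathcomp Require Import all_boot all_order all_algebra all_fingroup.
From mathcomp Require Import all_classical all_reals all_analysis measurable_realfun.
From mathcomp Require Import ring lra.
Import Order.TTheory GRing.Theory Num.Theory.
Set Implicit Arguments. Unset Strict Implicit. Unset Printing Implicit Defensive.
Local Open Scope ring_scope.
Lemma jacobi_unit (F : idomainType) k (M : 'M[F]_(2 + k)) : \det M != 0 ->
  \det (ulsubmx (\adj M)) = \det M * \det (drsubmx M).
Proof.
move=> dM0.
have eMC : block_mx (ulsubmx M) (ursubmx M) (dlsubmx M) (drsubmx M) *m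
   block_mx (ulsubmx (\adj M)) (ursubmx (\adj M)) (dlsubmx (\adj M)) (drsubmx (\adj M))
   = block_mx (\det M)%:M 0 0 (\det M)%:M.
  by rewrite !submxK mul_mx_adj -scalar_mx_block.
rewrite mulmx_block in eMC.
have [e1 e2 e3 e4] := eq_block_mx eMC.
pose B := block_mx (ulsubmx (\adj M)) 0 (dlsubmx (\adj M)) (1%:M : 'M[F]_(k)).
have : \det (M *m B) = \det M ^+ 2 * \det (drsubmx M).
  rewrite -{1}(submxK M) mulmx_block !mulmx0 !mulmx1 e1 e3 ?add0r ?addr0 ?mul0mx ?mulmx0 det_ublock.
  by rewrite det_scalar.
rewrite det_mulmx det_lblock det1 mulr1 expr2 -mulrA.
by move/(mulfI dM0).
Qed.

Lemma jacobi (F : fieldType) k (M : 'M[F]_(2 + k)) :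
  \det (ulsubmx (\adj M)) = \det M * \det (drsubmx M).
Proof.
pose N : 'M[{poly F}]_(2 + k) := 'X%:M - map_mx polyC (- M).
have dN : \det N != 0 by apply: monic_neq0; exact: char_poly_monic.
have J := jacobi_unit dN.
pose f : {rmorphism {poly F} -> F} := horner_eval (0 : F).
have fN : map_mx f N = M.
  apply/matrixP=> i j; rewrite !mxE /f /horner_eval /=.
  rewrite /= ?mxE horner_evalE. by rewrite ?mxE hornerD hornerN hornerMn hornerX hornerC opprK mul0rn add0r.
have := congr1 f J.
rewrite rmorphM -!(det_map_mx f) map_ulsubmx map_drsubmx map_mx_adj fN.
by [].
Qed.
Lemma det2 (F : comNzRingType) (B : 'M[F]_2) : \det B = B 0 0 * B 1 1 - B 0 1 * B 1 0.
Proof.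
rewrite (expand_det_row _ 0) !big_ord_recl big_ord0 /cofactor !det_mx11 !mxE /=.
have e1 : lift 0 0 = 1 :> 'I_2 by apply: val_inj.
have e2 : lift (lift 0 0) 0 = 0 :> 'I_2 by apply: val_inj.
rewrite ?e2 ?e1 /=.
by rewrite addr0 expr0 mul1r expr1 mulN1r mulrN.
Qed.

Lemma det_rowperm (F : comNzRingType) n (s : 'S_n) (B : 'M[F]_n) :
  \det (\matrix_(i, j) B (s i) j) = (-1) ^+ s * \det B.
Proof.
have -> : \matrix_(i, j) B (s i) j = row_perm s B by apply/matrixP=> i j; rewrite !mxE.
by rewrite row_permE det_mulmx det_perm.
Qed.

Lemma det_colperm (F : comNzRingType) n (s : 'S_n) (B : 'M[F]_n) :
  \det (\matrix_(i, j) B i (s j)) = (-1) ^+ s * \det B.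
Proof.
have -> : \matrix_(i, j) B i (s j) = col_perm s B by apply/matrixP=> i j; rewrite !mxE.
by rewrite col_permE det_mulmx det_perm odd_permV mulrC.
Qed.

Lemma det_simperm (F : comNzRingType) n (s : 'S_n) (B : 'M[F]_n) :
  \det (\matrix_(i, j) B (s i) (s j)) = \det B.
Proof.
have -> : \matrix_(i, j) B (s i) (s j) = \matrix_(i, j) (\matrix_(i, j) B i (s j)) (s i) j.
  by apply/matrixP=> i j; rewrite !mxE.
by rewrite det_rowperm det_colperm mulrA -signr_addb addbb expr0 mul1r.
Qed.

Lemma DJ (F : fieldType) k (A : nat -> nat -> F) :
  \det (\matrix_(i < k.+2, j < k.+2) A i j) * \det (\matrix_(i < k, j < k) A i.+1 j.+1) =
  \det (\matrix_(i < k.+1, j < k.+1) A i j) * \det (\matrix_(i < k.+1, j < k.+1) A i.+1 j.+1)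
  - \det (\matrix_(i < k.+1, j < k.+1) A i j.+1) * \det (\matrix_(i < k.+1, j < k.+1) A i.+1 j).
Proof.
pose h : 'S_(k.+1) := perm (@ord_pred_inj k.+1).
have hE (i : 'I_k.+1) : val (h i) = if val i == 0%N then k else (val i).-1.
  rewrite permE /= -subn1; case: i => [[|i] Hi] /=.
    by rewrite add0n subn1 /= modn_small.
  by rewrite addSn subn1 /= modnDr modn_small // ltnW.
pose p : 'S_(k.+2) := lift0_perm h.
pose pv (x : nat) := if x == 0%N then 0%N else if x == 1%N then k.+1 else x.-1.
have pE (x : 'I_k.+2) : val (p x) = pv x.
  rewrite /pv; case: (unliftP 0 x) => [y ->|->]; last by rewrite lift0_perm0.
  rewrite lift0_perm_lift /= /bump /= add1n hE.
  by case: y => [[|y] Hy].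
pose Ms : 'M[F]_(2 + k) := \matrix_(i, j) A (pv i) (pv j).
have J := jacobi Ms.
have -> : \det (\matrix_(i < k.+2, j < k.+2) A i j) = \det Ms.
  rewrite -(det_simperm p); congr (\det _); apply/matrixP=> i j; rewrite !mxE.
  by rewrite !pE.
have -> : \matrix_(i < k, j < k) A i.+1 j.+1 = drsubmx Ms.
  by apply/matrixP=> i j; rewrite !mxE.
rewrite -J det2 !mxE /cofactor.
have e00 : row' (lshift k 0) (col' (lshift k 0) Ms) =
   \matrix_(i, j) (\matrix_(i < k.+1, j < k.+1) A i.+1 j.+1) (h i) (h j).
  apply/matrixP=> i j; rewrite !mxE /= !hE /pv /=.
  by case: i => [[|i] Hi]; case: j => [[|j] Hj].
have e11 : row' (lshift k 1) (col' (lshift k 1) Ms) =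
   \matrix_(i < k.+1, j < k.+1) A i j.
  apply/matrixP=> i j; rewrite !mxE /= /pv /=.
  by case: i => [[|i] Hi]; case: j => [[|j] Hj].
have e10 : row' (lshift k 1) (col' (lshift k 0) Ms) =
   \matrix_(i, j) (\matrix_(i < k.+1, j < k.+1) A i j.+1) i (h j).
  apply/matrixP=> i j; rewrite !mxE /= !hE /pv /=.
  by case: i => [[|i] Hi]; case: j => [[|j] Hj].
have e01 : row' (lshift k 0) (col' (lshift k 1) Ms) =
   \matrix_(i, j) (\matrix_(i < k.+1, j < k.+1) A i.+1 j) (h i) j.
  apply/matrixP=> i j; rewrite !mxE /= !hE /pv /=.
  by case: i => [[|i] Hi]; case: j => [[|j] Hj].
rewrite e00 e11 e10 e01 det_simperm det_rowperm det_colperm /=.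
rewrite (_ : (1 %% 2 = 1)%N) // !addn0 !add0n expr0 expr1 !mul1r.
have s2 : (-1) ^+ h * (-1) ^+ h = 1 :> F by rewrite -signr_addb addbb.
rewrite -signr_odd /= expr0 mul1r mulrC; congr (_ - _).
rewrite !mulN1r mulrNN mulrACA s2 mul1r.
done.
Qed.
Unset Implicit Arguments.
Local Open Scope classical_set_scope.
Lemma inv_meas (R : realType) : measurable_fun (`]0, +oo[ : set R) GRing.inv.
Proof.
apply: open_continuous_measurable_fun; first exact: interval_open.
move=> x; rewrite inE /= in_itv /= andbT => x0.
by apply: inv_continuous; rewrite lt0r_neq0.
Qed.

Lemma measV d (T : measurableType d) (R : realType) (E : set T) (f : T -> R) :
  measurable E -> measurable_fun E f -> (forall x, E x -> 0 < f x) ->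
  measurable_fun E (fun x => (f x)^-1).
Proof.
move=> mE mf f0.
change (measurable_fun E (GRing.inv \o f)).
apply: (measurable_comp _ _ (inv_meas R) mf).
- exact: measurable_itv.
- by move=> _ [x Ex <-]; rewrite /= in_itv /= andbT f0.
Qed.

Definition gfun (R : realType) (s t i j : nat) (z : R * R) : R :=
  (z.1 ^+ (s + i) * z.2 ^+ (s + j) / (z.1 + z.2)) *
     ((1 - z.1) / (1 + z.1)) ^+ t * ((1 - z.2) / (1 + z.2)) ^+ t.

Definition Dsq (R : realType) : set (R * R) := `]0, 1[ `*` `]0, 1[.

Lemma mDsq (R : realType) : measurable (Dsq R).
Proof. by apply: measurableX; exact: measurable_itv. Qed.

Lemma Dsq_pos (R : realType) (z : R * R) : Dsq R z ->
  [/\ 0 < z.1, z.1 < 1, 0 < z.2 & z.2 < 1].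
Proof. by case=> /=; rewrite !in_itv /= => /andP[? ?] /andP[? ?]. Qed.

Lemma gfun_meas (R : realType) s t i j : measurable_fun (Dsq R) (gfun R s t i j).
Proof.
have mD := mDsq R.
have m1 : measurable_fun (Dsq R) (fun z : R * R => z.1) by apply: measurable_funTS; exact: measurable_fst.
have m2 : measurable_fun (Dsq R) (fun z : R * R => z.2) by apply: measurable_funTS; exact: measurable_snd.
have mc (c : R) : measurable_fun (Dsq R) (fun z : R * R => c) by exact: measurable_cst.
apply: measurable_funM; [apply: measurable_funM|]; last 2 first.
- apply: measurable_funX; apply: measurable_funM.
    exact: measurable_funB.
  apply: measV => //; first exact: measurable_funD.
  by move=> z /Dsq_pos[]; lra.
- apply: measurable_funX; apply: measurable_funM.
    exact: measurable_funB.
  apply: measV => //; first exact: measurable_funD.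
  by move=> z /Dsq_pos[]; lra.
apply: measurable_funM; first apply: measurable_funM.
- exact: measurable_funX.
- exact: measurable_funX.
apply: measV => //; first exact: measurable_funD.
by move=> z /Dsq_pos[]; lra.
Qed.

Lemma gfun_ge0 (R : realType) s t i j z : Dsq R z -> 0 <= gfun R s t i j z.
Proof.
move=> /Dsq_pos[x0 x1 y0 y1]; rewrite /gfun.
apply: mulr_ge0; [apply: mulr_ge0|]; last 2 first.
- by apply: exprn_ge0; apply: divr_ge0; lra.
- by apply: exprn_ge0; apply: divr_ge0; lra.
apply: divr_ge0; [apply: mulr_ge0; apply: exprn_ge0|]; lra.
Qed.

Lemma gfun_swap (R : realType) s t i j (z : R * R) :
  gfun R s t j i (z.2, z.1) = gfun R s t i j z.
Proof. rewrite /gfun /= [z.2 + z.1]addrC (mulrC (z.2 ^+ _)) -!mulrA; do 3 congr (_ * _); exact: mulrC. Qed.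

Lemma Dsq_swap (R : realType) (z : R * R) : Dsq R (z.2, z.1) = Dsq R z.
Proof. by apply/propext; split; case=> /= ? ?; split. Qed.

Lemma mom_gfun (R : realType) s t i j : mom R s t i j =
  fine (\int[(@lebesgue_measure R \x @lebesgue_measure R)%E]_(z in Dsq R)
    (gfun R s t i j z)%:E).
Proof. reflexivity. Qed.

Lemma mom_sym (R : realType) s t i j : mom R s t i j = mom R s t j i.
Proof.
rewrite !mom_gfun; congr fine.
rewrite [LHS]integral_mkcond [RHS]integral_mkcond.
set H := (fun z => (gfun R s t i j z)%:E) \_ (Dsq R).
have HH : (fun z => (gfun R s t j i z)%:E) \_ (Dsq R) = fun z => H (z.2, z.1).
  apply/funext=> z; rewrite /H /patch -gfun_swap.
  suff -> : ((z.2, z.1) \in Dsq R) = (z \in Dsq R) by [].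
  by apply/idP/idP => /set_mem h; apply/mem_set; move: h; rewrite Dsq_swap.
have mH : measurable_fun setT H.
  apply/(measurable_restrictT _ (mDsq R)).
  by apply/measurable_EFinP; exact: gfun_meas.
have H0 z : (0 <= H z)%E.
  rewrite /H /patch; case: ifPn => [/set_mem Dz|_]//.
  by rewrite lee_fin gfun_ge0.
have mH' : measurable_fun setT (fun z : R * R => H (z.2, z.1)).
  rewrite -HH; apply/(measurable_restrictT _ (mDsq R)).
  by apply/measurable_EFinP; exact: gfun_meas.
rewrite HH.
have F1 := @fubini_tonelli1 _ _ _ _ R (@lebesgue_measure R) (@lebesgue_measure R) H mH H0.
have F2 := @fubini_tonelli1 _ _ _ _ R (@lebesgue_measure R) (@lebesgue_measure R) _ mH' (fun z => H0 (z.2, z.1)).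
have F3 := @fubini_tonelli _ _ _ _ R (@lebesgue_measure R) (@lebesgue_measure R) H mH H0.
apply: (etrans F1); apply: (etrans F3); apply: esym; exact: F2.
Qed.

Lemma mom_shift (R : realType) s t i j : mom R s.+1 t i j = mom R s t i.+1 j.+1.
Proof. by rewrite /mom !addSnnS. Qed.

Theorem proposition3p1 (R : realType) (n s t : nat) :
  (1 <= n)%N ->
  tau R n.+1 s t * tau R n.-1 s.+1 t =
  tau R n s t * tau R n s.+1 t - xi R n s t ^+ 2.
Proof.
case: n => [//|k] _ /=.
rewrite /tau /xi.
have e1 m : \matrix_(i < m, j < m) mom R s.+1 t i j = \matrix_(i < m, j < m) mom R s t i.+1 j.+1.
  by apply/matrixP=> i j; rewrite !mxE mom_shift.
have e2 : \det (\matrix_(i < k.+1, j < k.+1) mom R s t i.+1 j) =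
          \det (\matrix_(i < k.+1, j < k.+1) mom R s t i j.+1).
  rewrite -det_tr; congr (\det _); apply/matrixP=> i j; rewrite !mxE.
  exact: mom_sym.
by rewrite !e1 (DJ k (mom R s t)) e2 expr2.
Qed.
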